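(* Let $f:\mathbb{R}^{d-1}\to\mathbb{R}\cup\{+\infty\}$ be a convex function which is finite and $\mathcal{C}^2$ in a neighborhood of $0$, with $f(0)=0$, $Df(0)=0$ and $D^2f(0)=2\,\mathrm{Id}$ (so $f(x')=\|x'\|^2+o(\|x'\|^2)$ as $x'\to0$). Then for every $\varepsilon>0$ there exists $r>0$ such that $f(x')\ge\tilde f(x')$ for all $x'\in\mathbb{R}^{d-1}$, where $\tilde f(x')=(1-\varepsilon)\|x'\|^2$ if $\|x'\|\le r$, and $\tilde f(x')=(1-\varepsilon)\,r\,(2\|x'\|-r)$ if $\|x'\|\ge r$.
   Context: In the paper, $f$ is the function such that a convex domain $D\subset\mathbb{R}^d$ is given (after an affine change of coordinates placing a boundary point at the origin with tangent hyperplane $\{x_1=0\}$) by $\{(x_1,x'):x_1+f(x')<0\}$, $x'=(x_2,\dots,x_d)$; $\|\cdot\|$ is the Euclidean norm. *)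

(* Defs.v *)
From HB Require Import structures.
From mathcomp Require Import all_boot all_order all_algebra.
From mathcomp Require Import all_classical all_reals all_analysis.
Set Implicit Arguments. Unset Strict Implicit. Unset Printing Implicit Defensive.
Import Order.TTheory GRing.Theory Num.Theory.
Import numFieldNormedType.Exports.
Local Open Scope ring_scope.

(* Points x' of R^(d-1) are row vectors 'rV[R]_n with n = d - 1. *)

Definition enorm (R : realType) (n : nat) (x : 'rV[R]_n) : R :=
  Num.sqrt (\sum_(i < n) x ord0 i ^+ 2).

Definition ebasis (R : realType) (n : nat) (i : 'I_n) : 'rV[R]_n :=
  delta_mx ord0 i.

(* convexity of an extended-real valued function with values in R ∪ {+oo} *)
Definition ext_convex (R : realType) (n : nat) (f : 'rV[R]_n -> \bar R) : Prop :=
  (forall x, f x != -oo%E) /\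
  forall (x y : 'rV[R]_n) (t : R), 0 < t < 1 ->
    (f (t *: x + (1 - t) *: y)%R <= t%:E * f x + (1 - t)%:E * f y)%E.

Definition ftilde (R : realType) (n : nat) (eps r : R) (x : 'rV[R]_n) : R :=
  if enorm x <= r then (1 - eps) * enorm x ^+ 2
  else (1 - eps) * r * (2 * enorm x - r).
Arguments ebasis {R n}.

(* Main.v *)
Require Import Defs.
From HB Require Import structures.
From mathcomp Require Import all_boot all_order all_algebra.
From mathcomp Require Import all_classical all_reals all_analysis.
From mathcomp Require Import ring lra.
Import Order.TTheory GRing.Theory Num.Theory.
Import numFieldNormedType.Exports.
Local Open Scope ring_scope.
Definition Ssq {R : realType} {n : nat} (x : 'rV[R]_n) := \sum_(i < n) x ord0 i ^+ 2.
Definition N1 {R : realType} {n : nat} (x : 'rV[R]_n) := \sum_(i < n) `|x ord0 i|.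

Lemma sum_ge_term {R : realType} {n : nat} (F : 'I_n -> R) j :
  (forall i, 0 <= F i) -> F j <= \sum_i F i.
Proof. move=> h; rewrite (bigD1 j) //= lerDl sumr_ge0 // => i _; exact: h. Qed.

Lemma Ssq_ge0 {R : realType} {n : nat} (x : 'rV[R]_n) : 0 <= Ssq x.
Proof. by apply: sumr_ge0 => i _; exact: sqr_ge0. Qed.

Lemma N1_ge0 {R : realType} {n : nat} (x : 'rV[R]_n) : 0 <= N1 x.
Proof. by apply: sumr_ge0 => i _. Qed.

Lemma enorm_ge0 {R : realType} {n : nat} (x : 'rV[R]_n) : 0 <= enorm x.
Proof. exact: sqrtr_ge0. Qed.

Lemma enorm_sqr {R : realType} {n : nat} (x : 'rV[R]_n) : enorm x ^+ 2 = Ssq x.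
Proof. by rewrite /enorm sqr_sqrtr // Ssq_ge0. Qed.

Lemma enorm_lt {R : realType} {n : nat} (x : 'rV[R]_n) d : 0 < d ->
  (enorm x < d) = (Ssq x < d ^+ 2).
Proof.
move=> d0; rewrite /enorm -{1}(ger0_norm (ltW d0)) -sqrtr_sqr ltr_sqrt //.
exact: exprn_gt0.
Qed.

Lemma enorm_le {R : realType} {n : nat} (x : 'rV[R]_n) d : 0 <= d ->
  (enorm x <= d) = (Ssq x <= d ^+ 2).
Proof.
move=> d0; rewrite /enorm -{1}(ger0_norm d0) -sqrtr_sqr ler_sqrt //.
exact: exprn_ge0.
Qed.

Lemma sqr_abs {R : realType} (a : R) : `|a| ^+ 2 = a ^+ 2.
Proof. by rewrite real_normK // num_real. Qed.

Lemma Ssq_le {R : realType} {n : nat} (x y : 'rV[R]_n) :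
  (forall i, `|x ord0 i| <= `|y ord0 i|) -> Ssq x <= Ssq y.
Proof.
move=> h; apply: ler_sum => i _; rewrite -sqr_abs -(sqr_abs (y _ _)).
by apply: lerXn2r; rewrite ?nnegrE.
Qed.

Lemma absc_le_N1 {R : realType} {n : nat} (x : 'rV[R]_n) i : `|x ord0 i| <= N1 x.
Proof. exact: (sum_ge_term (fun i => `|x ord0 i|)). Qed.

Lemma absc_le_enorm {R : realType} {n : nat} (x : 'rV[R]_n) i : `|x ord0 i| <= enorm x.
Proof.
rewrite -sqrtr_sqr /enorm ler_sqrt ?Ssq_ge0 //.
apply: (sum_ge_term (fun i => x ord0 i ^+ 2)) => j; exact: sqr_ge0.
Qed.

Lemma Ssq_scale {R : realType} {n : nat} (x : 'rV[R]_n) t : Ssq (t *: x) = t ^+ 2 * Ssq x.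
Proof. by rewrite /Ssq mulr_sumr; apply: eq_bigr => i _; rewrite mxE exprMn. Qed.

Lemma N1_scale {R : realType} {n : nat} (x : 'rV[R]_n) t : N1 (t *: x) = `|t| * N1 x.
Proof. by rewrite /N1 mulr_sumr; apply: eq_bigr => i _; rewrite mxE normrM. Qed.

Lemma enorm_scale {R : realType} {n : nat} (x : 'rV[R]_n) t : enorm (t *: x) = `|t| * enorm x.
Proof.
by rewrite /enorm -/(Ssq _) Ssq_scale sqrtrM ?sqrtr_sqr // sqr_ge0.
Qed.

Lemma CS {R : realType} {n : nat} (x : 'rV[R]_n) : N1 x ^+ 2 <= n%:R * Ssq x.
Proof.
set a := fun i : 'I_n => `|x ord0 i|.
have hS : Ssq x = \sum_i a i ^+ 2 by apply: eq_bigr => i _; rewrite /a sqr_abs.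
have h0 : 0 <= \sum_(i < n) \sum_(j < n) (a i - a j) ^+ 2.
  by apply: sumr_ge0 => i _; apply: sumr_ge0 => j _; exact: sqr_ge0.
have e1 : forall i : 'I_n, \sum_(j < n) (a i - a j) ^+ 2
    = a i ^+ 2 *+ n - (a i * N1 x) *+ 2 + Ssq x.
  move=> i; rewrite (eq_bigr (fun j => a i ^+ 2 - (a i * a j) *+ 2 + a j ^+ 2));
    last by move=> j _; rewrite sqrrB.
  rewrite big_split big_split /= sumrN sumr_const card_ord -hS; congr (_ - _ + _).
  by rewrite /N1 mulr_sumr -sumrMnl.
rewrite (eq_bigr _ (fun i _ => e1 i)) big_split big_split /= sumrN sumr_const card_ord in h0.
rewrite !sumrMnl in h0.
have E2 : \sum_(i < n) a i * N1 x = N1 x ^+ 2 by rewrite -mulr_suml expr2.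
rewrite E2 -hS in h0.
rewrite -[Ssq x *+ n]mulr_natr -[N1 x ^+ 2 *+ 2]mulr_natr in h0.
move: h0; rewrite mulrC; set u := _ * Ssq x; set w := N1 x ^+ 2; lra.
Qed.

Lemma conv_le {R : realType} {n : nat} (f : 'rV[R]_n -> \bar R) x y t a b :
  ext_convex f -> 0 < t < 1 -> (f x <= a%:E)%E -> (f y <= b%:E)%E ->
  (f (t *: x + (1 - t) *: y)%R <= (t * a + (1 - t) * b)%:E)%E.
Proof.
move=> [hN hc] ht hx hy.
apply: le_trans (hc x y t ht) _.
case/andP: ht => t0 t1.
rewrite (EFinD (t * a)) (EFinM t a) (EFinM (1 - t) b).
apply: leeD; apply: lee_wpmul2l => //; rewrite lee_fin; lra.
Qed.

Lemma jensen {R : realType} {n : nat} (f : 'rV[R]_n -> \bar R) (I : Type)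
    (s : seq I) (y : I -> 'rV[R]_n) (b : I -> R) :
  ext_convex f -> (forall i, (f (y i) <= (b i)%:E)%E) -> (0 < size s)%N ->
  (f ((size s)%:R^-1 *: \sum_(i <- s) y i)%R
     <= ((size s)%:R^-1 * \sum_(i <- s) b i)%:E)%E.
Proof.
move=> hf hb; elim: s => // i s IH _.
case: s IH => [|j s] IH.
  by rewrite /= !big_cons !big_nil !addr0 invr1 scale1r mul1r.
have {IH} := IH isT; set s' := j :: s => IH.
rewrite big_cons [in X in (_ <= X)%E]big_cons.
have -> : size (i :: s') = (size s').+1 by [].
set k := size s'.
have k0 : 0 < k%:R :> R by rewrite ltr0n.
pose t : R := k%:R / k.+1%:R.
have k1 : 0 < k.+1%:R :> R by rewrite ltr0n.
have ht : 0 < t < 1.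
  rewrite /t divr_gt0 //= ltr_pdivrMr // mul1r ltr_nat; exact: ltnSn.
have := @conv_le _ _ f _ _ t _ _ hf ht IH (hb i).
have e1 : t * k%:R^-1 = k.+1%:R^-1 by rewrite /t mulrAC divff ?mul1r // gt_eqF.
have e2 : 1 - t = k.+1%:R^-1.
  rewrite /t -[X in X - _](divff (lt0r_neq0 k1)) -mulrBl -natrB //.
  by rewrite subSnn mul1r.
rewrite scalerA e1 e2 mulrA e1 -scalerDr -mulrDr addrC [b i + _]addrC.
by [].
Qed.

Lemma near0'_ex {R : realType} (P : R -> Prop) :
  (\forall h \near (0:R)^', P h)%classic ->
  exists2 e : R, 0 < e & forall h, h != 0 -> `|h| < e -> P h.
Proof.
move=> /nbhs_ballP [e e0 he]; exists e => // h h0 hh.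
apply: he => //; rewrite /ball /= sub0r normrN //.
Qed.

Lemma ebasisE {R : realType} {n : nat} (i j : 'I_n) :
  (ebasis i : 'rV[R]_n) ord0 j = (j == i)%:R.
Proof. by rewrite /ebasis mxE eqxx /= eq_sym. Qed.

Lemma Ssq_shift {R : realType} {n : nat} (z : 'rV[R]_n) (i : 'I_n) (h : R) :
  Ssq (h *: ebasis i + z) = Ssq z + h * (2 * z ord0 i + h).
Proof.
rewrite /Ssq (bigD1 i) //= [in RHS](bigD1 i) //=.
rewrite (eq_bigr (fun j => z ord0 j ^+ 2)); last first.
  by move=> j /negbTE hj; rewrite !mxE eqxx /= hj mulr0 add0r.
rewrite !mxE !eqxx /= mulr1; set S := \sum_(j < n | _) _; lra.
Qed.

Lemma stay_in {R : realType} {n : nat} (z : 'rV[R]_n) d :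
  enorm z < d -> exists2 s : R, 0 < s &
    forall (i : 'I_n) (h : R), `|h| < s -> enorm (h *: ebasis i + z) < d.
Proof.
move=> hz.
have d0 : 0 < d by apply: le_lt_trans hz; exact: enorm_ge0.
have hS : Ssq z < d ^+ 2 by rewrite -enorm_lt.
set A := enorm z.
have A0 : 0 <= A by exact: enorm_ge0.
set D := d ^+ 2 - Ssq z.
have D0 : 0 < D by rewrite /D subr_gt0.
exists (Num.min 1 (D / (2 * A + 1))).
  by rewrite lt_min ltr01 divr_gt0 //; lra.
move=> i h; rewrite lt_min => /andP [h1 h2].
rewrite enorm_lt // Ssq_shift.
have hzi : `|z ord0 i| <= A by exact: absc_le_enorm.
have e1 : h * (2 * z ord0 i + h) <= `|h| * (2 * A + 1).
  apply: le_trans (ler_norm _) _; rewrite normrM; apply: ler_wpM2l => //.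
  apply: le_trans (ler_normD _ _) _; rewrite normrM ger0_norm //; lra.
have e2 : `|h| * (2 * A + 1) < D.
  by rewrite -ltr_pdivlMr //; lra.
rewrite /D in e2; lra.
Qed.

Lemma stepA {R : realType} {n : nat} (g : 'rV[R]_n -> R) (z : 'rV[R]_n) :
  (forall i : 'I_n, derivable g z (ebasis i)) ->
  forall th : R, 0 < th -> exists2 s : R, 0 < s &
    forall (i : 'I_n) (h : R), `|h| < s ->
     `|g (h *: ebasis i + z) - g z - h * derive g z (ebasis i)| <= th * `|h|.
Proof.
move=> hd th th0.
have : (\forall h \near (0:R)^', forall i : 'I_n,
    `|derive g z (ebasis i) - h^-1 *: (g (h *: ebasis i + z) - g z)| <= th)%classic.
  apply: filter_forall => i.
  have H := @cvgr_dist_le _ _ _ _ _ _ _ (hd i) th th0.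
  exact: H.
move=> /near0'_ex [s s0 hs]; exists s => // i h hh.
have [->|h0] := eqVneq h 0.
  rewrite scale0r add0r subrr mul0r subr0.
  first [ by rewrite !normr0 mulr0 | by rewrite mulr0 normr0 | by rewrite (normr0 (R:=R)) | by rewrite [`|0|]normr0 mulr0 | by rewrite normrE ].

have := hs h h0 hh i.
set D := g _ - g z; set p := derive _ _ _.
have E : D - h * p = - h * (p - h^-1 * D) :> R.
  by rewrite mulrBr !mulNr opprK mulrA mulfV // mul1r addrC.
by move=> H; rewrite E normrM normrN mulrC; apply: ler_wpM2r => //.
Qed.

Lemma row_sum_ebasis {R : realType} {n : nat} (v : 'rV[R]_n) :
  v = \sum_(i < n) v ord0 i *: ebasis i.
Proof.
apply/rowP => j; rewrite summxE (bigD1 j) //= big1 ?addr0.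
  by rewrite !mxE eqxx /= mulr1.
by move=> i hij; rewrite !mxE eqxx /= eq_sym (negbTE hij) mulr0.
Qed.

Lemma size_index_enum_ord n : size (index_enum 'I_n) = n.
Proof. by rewrite -sum1_size sum1_card card_ord. Qed.

Lemma stepB {R : realType} {n : nat} (f : 'rV[R]_n -> \bar R) (z : 'rV[R]_n)
  (p : 'I_n -> R) (gz th s : R) :
  ext_convex f -> f z = gz%:E -> (0 < n)%N ->
  (forall i h, `|h| < s -> (f (h *: ebasis i + z)%R <= (gz + h * p i + th * `|h|)%:E)%E) ->
  forall v : 'rV[R]_n, (forall i, `|n%:R * v ord0 i| < s) ->
  ((gz + \sum_i p i * v ord0 i - th * N1 v)%:E <= f (z + v)%R)%E.
Proof.
move=> hf hz n0 hF v hv.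
pose y := fun i : 'I_n => (- (n%:R * v ord0 i)) *: ebasis i + z.
pose b := fun i : 'I_n => gz + (- (n%:R * v ord0 i)) * p i + th * `|n%:R * v ord0 i|.
have hy : forall i, (f (y i) <= (b i)%:E)%E.
  by move=> i; rewrite /y /b -(normrN (n%:R * _)); apply: hF; rewrite normrN.
have hs : (0 < size (index_enum 'I_n))%N by rewrite size_index_enum_ord.
have := @jensen _ _ f _ _ y b hf hy hs.
have -> : size (index_enum 'I_n) = n by rewrite size_index_enum_ord.
have nz : n%:R != 0 :> R by rewrite pnatr_eq0 -lt0n.
have -> : n%:R^-1 *: \sum_(i <- index_enum 'I_n) y i = z - v.
  rewrite -/(\sum_(i < n) y i) /y big_split /= sumr_const card_ord.
  rewrite [v in RHS]row_sum_ebasis scalerDr -[z *+ n]scaler_nat scalerA mulVf // scale1r.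
  rewrite (eq_bigr (fun i => - (n%:R *: (v ord0 i *: ebasis i)))); last first.
    by move=> i _; rewrite scaleNr scalerA.
  by rewrite sumrN -scaler_sumr scalerN scalerA mulVf // scale1r addrC.
have Eb : \sum_(i < n) b i = n%:R * (gz - \sum_i p i * v ord0 i + th * N1 v).
  rewrite /b !big_split /= sumr_const card_ord.
  rewrite /N1 mulr_sumr mulrDr mulrBr !mulr_sumr mulr_natl -sumrN.
  congr (_ + _ + _); apply: eq_bigr => i _.
    by rewrite mulNr -mulrA (mulrC (v ord0 i)).
  by rewrite (@normrM _ (n%:R : R)) (ger0_norm (ler0n _ _)) mulrCA.
have -> : n%:R^-1 * \sum_(i <- index_enum 'I_n) b i
    = gz - \sum_i p i * v ord0 i + th * N1 v.
  by rewrite -/(\sum_(i < n) b i) Eb mulKf.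
move=> Hzv.
case E : (f (z + v)) => [a| |]; last 2 first.
- exact: leey.
- by move: hf => [hN _]; move: (hN (z + v)); rewrite E.
have := @conv_le _ _ f (z + v) (z - v) (1/2) a _ hf _ _ Hzv.
have -> : 1 / 2 *: (z + v) + (1 - 1 / 2) *: (z - v) = z.
  have -> : 1 - 1/2 = 1/2 :> R by lra.
  rewrite scalerDr scalerBr addrACA subrr addr0 -scalerDl.
  have -> : 1/2 + 1/2 = 1 :> R by lra.
  by rewrite scale1r.
rewrite hz lee_fin => H.
have h2 : 0 < (1/2 : R) < 1.
  by apply/andP; split; lra.
have h3 : (f (z + v)%R <= a%:E)%E by rewrite E.
have {}H := H h2 h3.
rewrite lee_fin.
move: H; set P := \sum_i _; set Q := N1 v; lra.
Qed.

Lemma stepC {R : realType} {n : nat} (f : 'rV[R]_n -> \bar R) (z : 'rV[R]_n)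
  (p : 'I_n -> R) (gz : R) :
  ext_convex f -> f z = gz%:E -> (0 < n)%N ->
  (forall th, 0 < th -> exists2 s, 0 < s & forall i h, `|h| < s ->
     (f (h *: ebasis i + z)%R <= (gz + h * p i + th * `|h|)%:E)%E) ->
  forall x : 'rV[R]_n, ((gz + \sum_i p i * (x ord0 i - z ord0 i))%:E <= f x)%E.
Proof.
move=> hf hz n0 hA x.
have hP : \sum_i p i * (x ord0 i - z ord0 i) = \sum_i p i * (x - z) ord0 i.
  by apply: eq_bigr => i _; rewrite !mxE.
rewrite hP; set v := x - z.
case E : (f x) => [a| |]; last 2 first.
- exact: leey.
- by move: hf => [hN _]; move: (hN x); rewrite E.
rewrite lee_fin; apply/ler_addgt0Pr => ep ep0.
set N := N1 v.
have N0 : 0 <= N := N1_ge0 v.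
pose th := ep / (N + 1).
have th0 : 0 < th by rewrite divr_gt0 //; lra.
have [s s0 hs] := hA th th0.
set nN := n%:R * N.
have nN0 : 0 <= nN by rewrite mulr_ge0.
pose t := s / (2 * (nN + s)).
have D0 : 0 < 2 * (nN + s) by lra.
have t0 : 0 < t by rewrite divr_gt0.
have tD : t * (2 * (nN + s)) = s by rewrite /t divfK // gt_eqF.
have ht : 0 < t < 1.
  by rewrite t0 /= /t ltr_pdivrMr // mul1r; lra.
have hv : forall i, `|n%:R * (t *: v) ord0 i| < s.
  move=> i; rewrite mxE (@normrM _ (n%:R : R)) (@normrM _ t) (ger0_norm (ler0n _ _)).
  rewrite (gtr0_norm t0).
  have hvi : `|v ord0 i| <= N := absc_le_N1 v i.
  have : n%:R * (t * `|v ord0 i|) <= t * nN.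
    have tn : 0 <= t * n%:R by rewrite mulr_ge0 // ltW.
    rewrite /nN; move: hvi tn; set w := `|v ord0 i|; set m := (n%:R : R); nra.
  move=> h1; apply: le_lt_trans h1 _.
  rewrite -tD; nra.
have HB := @stepB _ _ f z p gz th s hf hz n0 hs (t *: v) hv.
have hzv : (z + t *: v) = t *: x + (1 - t) *: z.
  by rewrite /v scalerBr scalerBl scale1r addrCA addrA.
have E1 : (f x <= a%:E)%E by rewrite E.
have E2 : (f z <= gz%:E)%E by rewrite hz.
have hc := @conv_le _ _ f x z t a gz hf ht E1 E2.
rewrite hzv in HB.
have := le_trans HB hc; rewrite lee_fin.
have -> : \sum_i p i * (t *: v) ord0 i = t * \sum_i p i * v ord0 i.
  by rewrite mulr_sumr; apply: eq_bigr => i _; rewrite mxE mulrCA.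
rewrite N1_scale (gtr0_norm t0) -/N.
set P := \sum_i _ => H.
have H1 : t * (gz + P - th * N - a) <= 0 by nra.
have H2 : gz + P - th * N - a <= 0 by rewrite -(pmulr_rle0 _ t0).
have H3 : th * N <= ep.
  rewrite /th mulrAC ler_pdivrMr; last by lra.
  nra.
lra.
Qed.

Lemma subgrad {R : realType} {n : nat} (f : 'rV[R]_n -> \bar R) (delta : R) :
  ext_convex f -> (forall x, enorm x < delta -> f x \is a fin_num) ->
  forall z : 'rV[R]_n, enorm z < delta ->
  (forall i : 'I_n, derivable (fun x => fine (f x)) z (ebasis i)) ->
  forall x : 'rV[R]_n,
  ((fine (f z) + \sum_i derive (fun x => fine (f x)) z (ebasis i)
       * (x ord0 i - z ord0 i))%:E <= f x)%E.
Proof.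
move=> hf hfin z hz hd x.
have hzE : f z = (fine (f z))%:E by rewrite fineK // hfin.
case: n f hf hfin z hz hd x hzE => [|k] f hf hfin z hz hd x hzE.
  by rewrite big_ord0 addr0 (thinmx0 x) -(thinmx0 z) -hzE.
apply: stepC => //.
move=> th th0.
have [s1 s10 hs1] := @stay_in _ _ z delta hz.
have [s2 s20 hs2] := @stepA _ _ _ z hd th th0.
exists (Num.min s1 s2); first by rewrite lt_min s10 s20.
move=> i h; rewrite lt_min => /andP [h1 h2].
have hfin' := hfin _ (hs1 i h h1).
rewrite -(fineK hfin') lee_fin.
have H := hs2 i h h2.
set G := fine (f _) in H *; set D := derive _ _ _ in H *.
have := ler_norm (G - fine (f z) - h * D).
move: H; set w := `|G - _ - _|; set hh := `|h|; lra.
Qed.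

Lemma mvt_bnd {R : realType} (phi dphi : R -> R) (L eta a b : R) :
  a <= b ->
  (forall x, a <= x <= b -> is_derive x 1 phi (dphi x)) ->
  (forall x, a <= x <= b -> `|dphi x - L| <= eta) ->
  `|phi b - phi a - L * (b - a)| <= eta * (b - a).
Proof.
move=> ab hd hb.
have [->|ab'] := eqVneq a b.
  by rewrite !subrr mulr0 subr0 normr0 mulr0.
have lab : a < b by rewrite lt_neqAle ab' ab.
have [c cin ->] : exists2 c, c \in `]a, b[ & phi b - phi a = dphi c * (b - a).
  apply: MVT => //.
    move=> x; rewrite in_itv /= => /andP [h1 h2].
    by apply: hd; rewrite !ltW.
  apply: derivable_within_continuous => x; rewrite in_itv /= => hx.
  by case: (hd x hx).
move: cin; rewrite in_itv /= => /andP [c1 c2].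
have ba : 0 < b - a by rewrite subr_gt0.
rewrite -mulrBl normrM (gtr0_norm ba).
apply: ler_wpM2r; first by rewrite subr_ge0.
by apply: hb; rewrite !ltW.
Qed.

Lemma line_derive {R : realType} {n : nat} (G : 'rV[R]_n -> R) (a v : 'rV[R]_n) (s : R) :
  derivable G (s *: v + a) v ->
  is_derive s 1 (fun t => G (t *: v + a)) (derive G (s *: v + a) v).
Proof.
have E : (fun h : R => h^-1 *: (((fun t => G (t *: v + a)) \o shift s) (h *: 1)
            - (fun t => G (t *: v + a)) s))
       = (fun h : R => h^-1 *: ((G \o shift (s *: v + a)) (h *: v)
            - G (s *: v + a))).
  apply: funext => h /=.
  by rewrite -[h%:A]/(h * 1) mulr1 scalerDl addrA.
move=> hd; apply: DeriveDef.
  by rewrite /derivable E.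
by rewrite /derive E.
Qed.

Definition zt {R : realType} {n : nat} (z : 'rV[R]_n) (m : nat) : 'rV[R]_n :=
  \row_(j < n) (if (j < m)%N then z ord0 j else 0).

Lemma zt0 {R : realType} {n : nat} (z : 'rV[R]_n) : zt z 0 = 0.
Proof. by apply/rowP => j; rewrite !mxE ltn0. Qed.

Lemma ztn {R : realType} {n : nat} (z : 'rV[R]_n) : zt z n = z.
Proof. by apply/rowP => j; rewrite !mxE ltn_ord. Qed.

Lemma ztS {R : realType} {n : nat} (z : 'rV[R]_n) m (hm : (m < n)%N) :
  zt z m.+1 = z ord0 (Ordinal hm) *: ebasis (Ordinal hm) + zt z m.
Proof.
apply/rowP => j; rewrite !mxE eqxx /=.
have -> : (j == Ordinal hm) = (nat_of_ord j == m) by [].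
case: (ltngtP j m) => hj.
- by rewrite ltnS ltnW // mulr0 add0r.
- by rewrite ltnS leqNgt hj mulr0 addr0.
- have -> : j = Ordinal hm by apply: val_inj.
  by rewrite ltnS leqnn mulr1 addr0.
Qed.

Lemma zt_dom {R : realType} {n : nat} (z : 'rV[R]_n) m (hm : (m < n)%N) (s : R) j :
  `|s| <= `|z ord0 (Ordinal hm)| ->
  `|(s *: ebasis (Ordinal hm) + zt z m) ord0 j| <= `|z ord0 j|.
Proof.
move=> hs; rewrite !mxE eqxx /=.
have -> : (j == Ordinal hm) = (nat_of_ord j == m) by [].
case: (ltngtP j m) => hj.
- by rewrite mulr0 add0r.
- by rewrite mulr0 addr0 normr0.
- have -> : j = Ordinal hm by apply: val_inj.
  by rewrite ?ltnn mulr1 addr0.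
Qed.

Lemma mx_norm_le_enorm {R : realType} {n : nat} (p : 'rV[R]_n) : `|p| <= enorm p.
Proof.
rewrite -[`|p|]/(mx_norm p) mx_normrE.
apply: bigmax_le; first exact: enorm_ge0.
by move=> [a b] _ /=; rewrite (ord1 a); exact: absc_le_enorm.
Qed.

Lemma cont_radius {R : realType} {n : nat} (D : 'I_n -> 'I_n -> 'rV[R]_n -> R) :
  (forall i j, {for 0, continuous (D i j)}) ->
  forall eta : R, 0 < eta -> exists2 e : R, 0 < e &
    forall p, enorm p < e -> forall i j, `|D i j 0 - D i j p| <= eta.
Proof.
move=> hc eta e0.
have H1 : forall i j, \forall p \near (0 : 'rV[R]_n), `|D i j 0 - D i j p| <= eta.
  move=> i j.
  have H := @cvgr_dist_le _ _ _ _ _ _ _ (hc i j) eta e0.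
  exact: H.
have H2 : forall i, \forall p \near (0 : 'rV[R]_n), forall j, `|D i j 0 - D i j p| <= eta.
  move=> i; apply: (@filter_forall _ _ _ (nbhs (0 : 'rV[R]_n))) => j; exact: H1.
have : \forall p \near (0 : 'rV[R]_n), forall i j, `|D i j 0 - D i j p| <= eta.
  apply: (@filter_forall _ _ _ (nbhs (0 : 'rV[R]_n))) => i; exact: H2.
move=> /nbhs_ballP [e e0' he]; exists e => // p hp.
apply: he; rewrite -ball_normE /ball_ /= sub0r normrN.
exact: le_lt_trans (mx_norm_le_enorm p) hp.
Qed.

Lemma grad_approx {R : realType} {n : nat} (g : 'rV[R]_n -> R) (delta : R) :
  0 < delta ->
  (forall (x : 'rV[R]_n) (i j : 'I_n), enorm x < delta ->
      derivable (fun y => derive g y (ebasis i)) x (ebasis j)) ->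
  (forall i j : 'I_n, {for 0, continuous
      (fun y => derive (fun z => derive g z (ebasis i)) y (ebasis j))}) ->
  (forall i : 'I_n, derive g 0 (ebasis i) = 0) ->
  (forall i j : 'I_n, derive (fun z => derive g z (ebasis i)) 0 (ebasis j)
      = if i == j then 2 else 0) ->
  forall eta : R, 0 < eta -> exists2 rho : R, 0 < rho /\ rho <= delta &
    forall z : 'rV[R]_n, enorm z < rho ->
      forall i, `|derive g z (ebasis i) - 2 * z ord0 i| <= eta * N1 z.
Proof.
move=> d0 hder hc hg0 hH eta e0.
pose D := fun (i j : 'I_n) y => derive (fun z => derive g z (ebasis i)) y (ebasis j).
have [e e0' he] := @cont_radius _ _ D hc eta e0.
exists (Num.min e delta).
  by rewrite lt_min e0' d0 ge_min lexx orbT.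
move=> z; rewrite lt_min => /andP [hze hzd].
pose gr := fun y i => derive g y (ebasis i).
have key : forall m, (m <= n)%N -> forall i,
   `|gr (zt z m) i - 2 * (zt z m) ord0 i|
      <= eta * \sum_(j < n | (j < m)%N) `|z ord0 j|.
  elim => [|m IH] hm i.
    rewrite zt0 /gr hg0 mxE mulr0 subrr normr0.
    by apply: mulr_ge0; [exact: ltW | exact: sumr_ge0].
  have hm' : (m < n)%N := hm.
  pose M := Ordinal hm'.
  have {IH} IH := IH (ltnW hm) i.
  set a := zt z m in IH *.
  pose zM := z ord0 M.
  pose L : R := if i == M then 2 else 0.
  have hin : forall s, `|s| <= `|zM| -> enorm (s *: ebasis M + a) <= enorm z.
    move=> s hs; rewrite /enorm ler_sqrt ?Ssq_ge0 //.
    by apply: Ssq_le => j; exact: zt_dom.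
  have hmvt : `|gr (zM *: ebasis M + a) i - gr a i - L * zM| <= eta * `|zM|.
    pose phi := fun t => gr (t *: ebasis M + a) i.
    pose dphi := fun t => D i M (t *: ebasis M + a).
    have hd : forall t : R, `|t| <= `|zM| -> is_derive t 1 phi (dphi t).
      move=> t ht; apply: (@line_derive _ _ (fun y => derive g y (ebasis i))).
      apply: hder; exact: le_lt_trans (hin t ht) hzd.
    have hb : forall t : R, `|t| <= `|zM| -> `|dphi t - L| <= eta.
      move=> t ht; have := he _ (le_lt_trans (hin t ht) hze) i M.
      by rewrite /D hH -/L distrC.
    have phi0 : phi 0 = gr a i by rewrite /phi scale0r add0r.
    have [zpos|zneg] := leP 0 zM.
      have hx : forall x : R, 0 <= x <= zM -> `|x| <= `|zM|.
        move=> x /andP [x0 x1]; rewrite (ger0_norm x0) (ger0_norm zpos) //.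
      have := @mvt_bnd _ phi dphi L eta 0 zM zpos (fun x h => hd x (hx x h))
        (fun x h => hb x (hx x h)).
      by rewrite subr0 phi0 (ger0_norm zpos).
    have hx : forall x : R, zM <= x <= 0 -> `|x| <= `|zM|.
      move=> x /andP [x0 x1]; rewrite (ler0_norm x1) (ltr0_norm zneg); lra.
    have := @mvt_bnd _ phi dphi L eta zM 0 (ltW zneg) (fun x h => hd x (hx x h))
        (fun x h => hb x (hx x h)).
    rewrite sub0r phi0 (ltr0_norm zneg).
    have -> : gr a i - phi zM - L * - zM = - (phi zM - gr a i - L * zM).
      by rewrite mulrN; lra.
    by rewrite normrN.
  rewrite (@ztS _ _ z m hm') -/M -/zM -/a.
  rewrite (bigD1 M) /=; last by rewrite ltnSn.
  rewrite (eq_bigl (fun j : 'I_n => (j < m)%N)); last first.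
    move=> j /=; rewrite ltnS leq_eqVlt.
    have -> : (j != M) = (nat_of_ord j != m) by [].
    by case: ltngtP.
  have hc2 : 2 * (zM *: ebasis M + a) ord0 i = L * zM + 2 * a ord0 i.
    rewrite !mxE eqxx /= /L; set w := (if (i < m)%N then _ else _).
    by case: (i == M) => /=; rewrite ?mulr1 ?mulr0 ?mul0r; lra.
  rewrite hc2.
  set A := gr (zM *: ebasis M + a) i.
  have -> : A - (L * zM + 2 * a ord0 i)
     = (A - gr a i - L * zM) + (gr a i - 2 * a ord0 i) by lra.
  apply: le_trans (ler_normD _ _) _.
  rewrite mulrDr; exact: lerD.
move=> i; have := key n (leqnn n) i.
rewrite ztn.
have -> : \sum_(j < n | (j < n)%N) `|z ord0 j| = N1 z.
  by apply: eq_bigl => j; rewrite ltn_ord.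
by [].
Qed.

Lemma dot_scale {R : realType} {n : nat} (x : 'rV[R]_n) (a b : R) :
  \sum_i (a *: x) ord0 i * (b *: x) ord0 i = a * b * Ssq x.
Proof.
rewrite /Ssq mulr_sumr; apply: eq_bigr => i _; rewrite !mxE; ring.
Qed.

Lemma inner_bound {R : realType} {n : nat} (p : 'I_n -> R) (y w : 'rV[R]_n) (c : R) :
  (forall i, `|p i - 2 * y ord0 i| <= c * N1 y) ->
  2 * (\sum_i y ord0 i * w ord0 i) - c * N1 y * N1 w <= \sum_i p i * w ord0 i.
Proof.
move=> hp.
have h1 : forall i : 'I_n, - (c * N1 y * `|w ord0 i|)
    <= (p i - 2 * y ord0 i) * w ord0 i.
  move=> i.
  have hq : `|(p i - 2 * y ord0 i) * w ord0 i| <= c * N1 y * `|w ord0 i|.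
    by rewrite normrM ler_wpM2r.
  move: hq; set q := (p i - _) * _ => hq.
  have := ler_norm (- q); rewrite normrN.
  move: hq; set u := `|q|; lra.
have : \sum_(i < n) - (c * N1 y * `|w ord0 i|)
    <= \sum_(i < n) (p i - 2 * y ord0 i) * w ord0 i.
  by apply: ler_sum => i _; exact: h1.
rewrite sumrN -mulr_sumr -/(N1 w).
have -> : \sum_i (p i - 2 * y ord0 i) * w ord0 i
    = \sum_i p i * w ord0 i - 2 * \sum_i y ord0 i * w ord0 i.
  rewrite mulr_sumr -sumrB; apply: eq_bigr => i _; ring.
set A := \sum_i p i * _; set B := \sum_i y ord0 i * _.
move=> h; lra.
Qed.

Lemma main_real {R : realType} {n : nat} (f : 'rV[R]_n -> \bar R) (delta e eta rho : R) :
  ext_convex f ->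
  (forall x, enorm x < delta -> f x \is a fin_num) ->
  (forall (y : 'rV[R]_n) (i : 'I_n), enorm y < delta ->
     derivable (fun x => fine (f x)) y (ebasis i)) ->
  fine (f 0) = 0 ->
  0 < e -> e <= 1 -> 0 < eta -> eta * n%:R <= e -> 0 < rho -> rho <= delta ->
  (forall z : 'rV[R]_n, enorm z < rho -> forall i,
     `|derive (fun x => fine (f x)) z (ebasis i) - 2 * z ord0 i| <= eta * N1 z) ->
  forall x, ((ftilde e (rho / 2) x)%:E <= f x)%E.
Proof.
move=> hf hfin hd hg00 e0 e1 eta0 etan rho0 rhod hgr.
set g := fun x => fine (f x).
set r := rho / 2.
have r0 : 0 < r by rewrite divr_gt0.
have rr : r < rho by rewrite /r; lra.
have SG : forall y : 'rV[R]_n, enorm y < rho -> forall x : 'rV[R]_n,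
    ((g y + \sum_i derive g y (ebasis i) * (x ord0 i - y ord0 i))%:E <= f x)%E.
  move=> y hy x; apply: (@subgrad _ _ f delta hf hfin).
    exact: lt_le_trans hy rhod.
  by move=> i; apply: hd; exact: lt_le_trans hy rhod.
have hQ : forall x : 'rV[R]_n, (2 - e) * Ssq x <= 2 * Ssq x - eta * N1 x ^+ 2.
  move=> x; have S0 := Ssq_ge0 x.
  have h1 : eta * N1 x ^+ 2 <= eta * (n%:R * Ssq x).
    by apply: ler_wpM2l; [exact: ltW | exact: CS].
  have h2 : eta * n%:R * Ssq x <= e * Ssq x by apply: ler_wpM2r.
  rewrite mulrA in h1; lra.
have ball : forall x, enorm x <= r -> (1 - e) * Ssq x <= g x.
  move=> x hx.
  have hxr : enorm x < rho by exact: le_lt_trans hx rr.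
  pose N := (Num.trunc (2 / e)).+1.
  have hN : 2 / e < N%:R := truncnS_gt _.
  have N0 : 0 < N%:R :> R by rewrite ltr0n.
  pose t := (N%:R : R)^-1.
  have t0 : 0 < t by rewrite invr_gt0.
  have tN : t * N%:R = 1 by rewrite mulVf // gt_eqF.
  have claim : forall k, (k <= N)%N ->
      (2 * Ssq x - eta * N1 x ^+ 2) * t ^+ 2 * (k%:R * (k%:R - 1) / 2)
        <= g ((k%:R * t) *: x).
    elim => [|k IH] hk.
      have -> : (0%:R * t) = 0 :> R by rewrite mul0r.
      by rewrite scale0r /g hg00 !mul0r mulr0.
    have {IH} IH := IH (ltnW hk).
    have kt0 : 0 <= k%:R * t by rewrite mulr_ge0 // ltW.
    have kt1 : k.+1%:R * t <= 1.
      apply: le_trans (_ : k.+1%:R * t <= N%:R * t) _; last by rewrite mulrC tN.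
      by apply: ler_wpM2r; [exact: ltW | rewrite ler_nat].
    have kt2 : k%:R * t <= k.+1%:R * t.
      by apply: ler_wpM2r; [exact: ltW | rewrite ler_nat].
    have hy : enorm ((k%:R * t) *: x) < rho.
      rewrite enorm_scale (ger0_norm kt0); apply: le_lt_trans hxr.
      rewrite -[X in _ <= X]mul1r; apply: ler_wpM2r; [exact: enorm_ge0 | lra].
    have hx' : enorm ((k.+1%:R * t) *: x) < delta.
      rewrite enorm_scale ger0_norm ?(le_trans kt0 kt2) //.
      apply: le_lt_trans (lt_le_trans hxr rhod).
      by rewrite -[X in _ <= X]mul1r; apply: ler_wpM2r; [exact: enorm_ge0 | ].
    have := SG _ hy ((k.+1%:R * t) *: x).
    rewrite -(fineK (hfin _ hx')) lee_fin -/(g _).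
    have -> : \sum_i derive g ((k%:R * t) *: x) (ebasis i)
          * (((k.+1%:R * t) *: x) ord0 i - ((k%:R * t) *: x) ord0 i)
        = \sum_i derive g ((k%:R * t) *: x) (ebasis i) * (t *: x) ord0 i.
      by apply: eq_bigr => i _; rewrite !mxE -natr1; congr (_ * _); ring.
    have hK := @inner_bound _ _ _ _ (t *: x) _ (hgr _ hy).
    rewrite dot_scale !N1_scale (ger0_norm kt0) (gtr0_norm t0) in hK.
    have E1 : 2 * (k%:R * t * t * Ssq x) - eta * (k%:R * t * N1 x) * (t * N1 x)
        = k%:R * t ^+ 2 * (2 * Ssq x - eta * N1 x ^+ 2) by ring.
    rewrite E1 in hK.
    have E2 : (2 * Ssq x - eta * N1 x ^+ 2) * t ^+ 2 * (k.+1%:R * (k.+1%:R - 1) / 2)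
      = (2 * Ssq x - eta * N1 x ^+ 2) * t ^+ 2 * (k%:R * (k%:R - 1) / 2)
        + k%:R * t ^+ 2 * (2 * Ssq x - eta * N1 x ^+ 2).
      by rewrite -[k.+1%:R]natr1; field.
    rewrite E2.
    move: IH hK; set G1 := g _; set G2 := g _; set A := \sum_i _.
    set B := _ * t ^+ 2 * _; set C := k%:R * _ * _; lra.
  have := claim N (leqnn N).
  rewrite [N%:R * t]mulrC tN scale1r.
  have E3 : t ^+ 2 * (N%:R * (N%:R - 1) / 2) = (1 - t) / 2.
    transitivity ((t * N%:R) * (t * N%:R - t) / 2); first by ring.
    by rewrite tN mul1r.
  rewrite -mulrA E3.
  have h2e : 2 < e * N%:R by rewrite mulrC -ltr_pdivrMr.
  have te : e * (t * N%:R) = e by rewrite tN mulr1.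
  have h3 : 0 < t * (e * N%:R - 2) by rewrite mulr_gt0 // subr_gt0.
  have S0 := Ssq_ge0 x.
  have hq := hQ x.
  have h4 : 0 <= (2 * Ssq x - eta * N1 x ^+ 2 - (2 - e) * Ssq x) * (1 - t).
    rewrite mulr_ge0 // ?subr_ge0 //; lra.
  have h5 : 0 <= (2 - e) * Ssq x * (e / 2 - t).
    rewrite mulr_ge0 // ?mulr_ge0 //; lra.
  have h6 : 0 <= e ^+ 2 * Ssq x by rewrite mulr_ge0 // sqr_ge0.
  move: h4 h5 h6 hq; set Q := 2 * Ssq x - _; lra.
move=> x; rewrite /ftilde; case: ifP => hxr.
  have hx' : enorm x < delta.
    by apply: le_lt_trans hxr _; exact: lt_le_trans rr rhod.
  rewrite -(fineK (hfin x hx')) lee_fin enorm_sqr.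
  exact: ball.
move/negbT: hxr; rewrite -ltNge => hxr.
set X := enorm x.
have X0 : 0 < X by exact: lt_trans r0 hxr.
pose a := r / X.
have a0 : 0 < a by rewrite divr_gt0.
have aX : a * X = r by rewrite /a divfK // gt_eqF.
have a1 : a < 1 by rewrite /a ltr_pdivrMr // mul1r.
have hyr : enorm (a *: x) = r by rewrite enorm_scale (gtr0_norm a0).
have hy : enorm (a *: x) < rho by rewrite hyr.
have hyr' : enorm (a *: x) <= r by rewrite hyr.
have gy := ball _ hyr'.
rewrite -(enorm_sqr (a *: x)) hyr in gy.
apply: le_trans (SG _ hy x); rewrite lee_fin.
have -> : \sum_i derive g (a *: x) (ebasis i) * (x ord0 i - (a *: x) ord0 i)
    = \sum_i derive g (a *: x) (ebasis i) * ((1 - a) *: x) ord0 i.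
  by apply: eq_bigr => i _; rewrite !mxE mulrBl mul1r.
have hK := @inner_bound _ _ _ _ ((1 - a) *: x) _ (hgr _ hy).
have a1' : 0 < 1 - a by rewrite subr_gt0.
rewrite dot_scale !N1_scale (gtr0_norm a0) (gtr0_norm a1') in hK.
have E1 : 2 * (a * (1 - a) * Ssq x) - eta * (a * N1 x) * ((1 - a) * N1 x)
    = a * (1 - a) * (2 * Ssq x - eta * N1 x ^+ 2) by ring.
rewrite E1 in hK.
have E2 : a * (1 - a) * Ssq x = r * (X - r).
  rewrite -(enorm_sqr x) -/X.
  transitivity ((a * X) * (X - a * X)); first by ring.
  by rewrite aX.
have h1 : a * (1 - a) * ((2 - e) * Ssq x)
    <= a * (1 - a) * (2 * Ssq x - eta * N1 x ^+ 2).
  by apply: ler_wpM2l; [rewrite mulr_ge0 // ltW | exact: hQ].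
have E3 : a * (1 - a) * ((2 - e) * Ssq x) = (2 - e) * (r * (X - r)).
  by rewrite -E2; ring.
rewrite E3 in h1.
have h2 : 0 <= e * (r * (X - r)) by rewrite mulr_ge0 ?mulr_ge0 ?subr_ge0 // ?ltW.
move: h1 hK gy h2; set A := \sum_i _; set B := a * (1 - a) * _; set G := g _.
lra.
Qed.

Lemma enorm0 {R : realType} {n : nat} : enorm (0 : 'rV[R]_n) = 0.
Proof. by rewrite /enorm big1 ?sqrtr0 // => i _; rewrite mxE expr0n. Qed.

Theorem lemma1 (R : realType) (n : nat) (f : 'rV[R]_n -> \bar R) :
  ext_convex f ->
  (exists delta : R, 0 < delta /\
    (forall x, enorm x < delta -> f x \is a fin_num) /\
    let g := fun x => fine (f x) in
    (forall x (i j : 'I_n), enorm x < delta ->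
       [/\ derivable g x (ebasis i),
           derivable (fun y => derive g y (ebasis i)) x (ebasis j),
           {for x, continuous (fun y => derive g y (ebasis i))} &
           {for x, continuous
              (fun y => derive (fun z => derive g z (ebasis i)) y (ebasis j))}]) /\
    g 0 = 0 /\
    (forall i : 'I_n, derive g 0 (ebasis i) = 0) /\
    (forall i j : 'I_n,
       derive (fun z => derive g z (ebasis i)) 0 (ebasis j)
         = if i == j then 2 else 0)) ->
  forall eps : R, 0 < eps ->
  exists r : R, 0 < r /\ forall x : 'rV[R]_n, ((ftilde eps r x)%:E <= f x)%E.
Proof.
move=> hf [delta [d0 [hfin H]]] eps eps0.
case: H => hC2 [hg00 [hg0 hH]].
pose e := Num.min eps 1.
have e0 : 0 < e by rewrite lt_min eps0 ltr01.
have e1 : e <= 1 by rewrite ge_min lexx orbT.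
have ee : e <= eps by rewrite ge_min lexx.
pose eta := e / (n.+1)%:R.
have n1 : 0 < (n.+1)%:R :> R by rewrite ltr0n.
have eta0 : 0 < eta by rewrite divr_gt0.
have etan : eta * n%:R <= e.
  rewrite /eta mulrAC ler_pdivrMr //.
  by apply: ler_wpM2l; [exact: ltW | rewrite ler_nat].
have hder : forall (x : 'rV[R]_n) (i j : 'I_n), enorm x < delta ->
    derivable (fun y => derive (fun x => fine (f x)) y (ebasis i)) x (ebasis j).
  by move=> x i j hx; case: (hC2 x i j hx).
have hcont : forall i j : 'I_n, {for 0, continuous
    (fun y => derive (fun z => derive (fun x => fine (f x)) z (ebasis i)) y (ebasis j))}.
  have h0 : enorm (0 : 'rV[R]_n) < delta by rewrite enorm0.
  by move=> i j; case: (hC2 0 i j h0).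
have hd : forall (y : 'rV[R]_n) (i : 'I_n), enorm y < delta ->
    derivable (fun x => fine (f x)) y (ebasis i).
  by move=> y i hy; case: (hC2 y i i hy).
have [rho [rho0 rhod] hgr] := @grad_approx _ _ (fun x => fine (f x)) delta d0
   hder hcont hg0 hH eta eta0.
exists (rho / 2); split; first by rewrite divr_gt0.
move=> x.
apply: le_trans (@main_real _ _ f delta e eta rho hf hfin hd hg00 e0 e1 eta0 etan
   rho0 rhod hgr x).
rewrite lee_fin /ftilde; case: ifP => hx.
  have := sqr_ge0 (enorm x); set X := enorm x ^+ 2 => hX.
  have h : 0 <= (eps - e) * X by rewrite mulr_ge0 // subr_ge0.
  lra.
move/negbT: hx; rewrite -ltNge => hx.
have r0 : 0 < rho / 2 by rewrite divr_gt0.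
have hX : 0 <= rho / 2 * (2 * enorm x - rho / 2).
  by rewrite mulr_ge0 // ?ltW //; lra.
have h : 0 <= (eps - e) * (rho / 2 * (2 * enorm x - rho / 2)).
  by rewrite mulr_ge0 // subr_ge0.
move: h hX; set r := rho / 2; set X := enorm x; lra.
Qed.
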